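(* A connected graph $G$ belongs to DH $\cap$ co-DH if and only if $G$ admits a sequence of twin eliminations ending in a graph isomorphic to an induced subgraph of the Bull.
   Context: All graphs are finite and simple. A graph is distance-hereditary if it has no induced subgraph isomorphic to a hole (an induced cycle of length at least $5$), the house (a $5$-cycle plus one chord), the domino (a $6$-cycle $v_1\dots v_6$ plus the chord $v_1v_4$), or the gem ($P_4$ plus a vertex adjacent to all four of its vertices). DH $\cap$ co-DH is the class of graphs $G$ such that both $G$ and its complement are distance-hereditary. Two distinct vertices $u,v$ are twins if $N(u)\setminus\{u,v\}=N(v)\setminus\{u,v\}$. A sequence of twin eliminations from $G$ to $H$ is a sequence $G=G_0,G_1,\dots,G_k=H$ ($k\ge 0$) where each $G_{i+1}=G_i-v_i$ for some vertex $v_i$ of $G_i$ having a twin in $G_i$. The Bull is the graph on vertices $a,b,c,d,e$ with edges $ab,bc,ca,ad,be$. *)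

(* Defs.v *)
(* Finite simple graphs: a finType of vertices with a
   symmetric irreflexive boolean adjacency relation. *)
From mathcomp Require Import all_boot.
Set Implicit Arguments. Unset Strict Implicit. Unset Printing Implicit Defensive.

Definition compl (T : finType) (e : rel T) : rel T :=
  fun x y => (x != y) && ~~ e x y.

Definition connected_graph (T : finType) (e : rel T) : Prop :=
  (0 < #|T|) /\ forall x y : T, connect e x y.

Definition has_induced (U : finType) (h : rel U) (T : finType) (e : rel T) : Prop :=
  exists f : U -> T, injective f /\ forall x y, e (f x) (f y) = h x y.

Definition edges_rel (n : nat) (E : seq (nat * nat)) : rel 'I_n :=
  fun i j => ((val i, val j) \in E) || ((val j, val i) \in E).
Arguments edges_rel : clear implicits.

Definition cycle_rel (n : nat) : rel 'I_n :=
  fun i j => (val j == (val i).+1 %% n) || (val i == (val j).+1 %% n).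
Arguments cycle_rel : clear implicits.

Definition house : rel 'I_5 :=
  edges_rel 5 [:: (0,1); (1,2); (2,3); (3,4); (4,0); (0,2)].
(* 6-cycle v1..v6 (here 0..5) plus chord v1v4 (here 0-3) *)
Definition domino : rel 'I_6 :=
  edges_rel 6 [:: (0,1); (1,2); (2,3); (3,4); (4,5); (5,0); (0,3)].
(* P4 0-1-2-3 plus vertex 4 adjacent to all *)
Definition gem : rel 'I_5 :=
  edges_rel 5 [:: (0,1); (1,2); (2,3); (4,0); (4,1); (4,2); (4,3)].
(* Bull: a=0, b=1, c=2, d=3, e=4; edges ab, bc, ca, ad, be *)
Definition bull : rel 'I_5 :=
  edges_rel 5 [:: (0,1); (1,2); (2,0); (0,3); (1,4)].

Definition distance_hereditary (T : finType) (e : rel T) : Prop :=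
  (forall n, 5 <= n -> ~ has_induced (cycle_rel n) e) /\
  ~ has_induced house e /\ ~ has_induced domino e /\ ~ has_induced gem e.

Definition twins_in (T : finType) (e : rel T) (S : {set T}) (u v : T) : bool :=
  [&& u \in S, v \in S, u != v &
   [forall w in S, (w != u) ==> (w != v) ==> (e u w == e v w)]].

Inductive twin_elim (T : finType) (e : rel T) : {set T} -> {set T} -> Prop :=
  | twin_elim_refl S : twin_elim e S S
  | twin_elim_step S S' v u :
      twins_in e S v u -> twin_elim e (S :\ v) S' -> twin_elim e S S'.

Definition iso_induced_sub (T : finType) (e : rel T) (S : {set T})
  (U : finType) (h : rel U) : Prop :=
  exists f : T -> U, {in S &, injective f} /\
    {in S &, forall x y, h (f x) (f y) = e x y}.

(* Main.v *)
Require Import Defs.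
From mathcomp Require Import all_boot zify.
From Stdlib Require Import Classical.
Set Implicit Arguments. Unset Strict Implicit. Unset Printing Implicit Defensive.

Fixpoint sany {A} (p : A -> bool) (s : seq A) := if s is x :: s' then (if p x then true else sany p s') else false.
Fixpoint sall {A} (p : A -> bool) (s : seq A) := if s is x :: s' then (if p x then sall p s' else false) else true.
Lemma sanyE A p s : @sany A p s = has p s.
Proof. by elim: s => //= x s ->; case: (p x). Qed.
Lemma sallE A p s : @sall A p s = all p s.
Proof. by elim: s => //= x s ->; case: (p x). Qed.
Arguments sall : simpl never.
Arguments sany : simpl never.

Definition entry (M : seq (seq bool)) i j := nth false (nth [::] M i) j.
Definition edgesN (E : seq (nat*nat)) (i j : nat) := ((i, j) \in E) || ((j, i) \in E).
Definition c5N (i j : nat) := (j == i.+1 %% 5) || (i == j.+1 %% 5).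
Definition houseN := edgesN [:: (0,1); (1,2); (2,3); (3,4); (4,0); (0,2)].
Definition gemN := edgesN [:: (0,1); (1,2); (2,3); (4,0); (4,1); (4,2); (4,3)].
Definition matN n (F : nat -> nat -> bool) := [seq [seq F i j | j <- iota 0 n] | i <- iota 0 n].
Definition cmat (M : seq (seq bool)) :=
  [seq [seq (i != j) && ~~ entry M i j | j <- iota 0 (size M)] | i <- iota 0 (size M)].
Definition iso5 M (FM : seq (seq bool)) (p : seq nat) :=
  sall (fun i => sall (fun j => entry M (nth 0 p i) (nth 0 p j) == entry FM i j) (iota 0 5)) (iota 0 5).
Definition cands n := if n == 5 then permutations (iota 0 5)
  else flatten [seq permutations (rem j (iota 0 n)) | j <- iota 0 n].
Definition valid n (p : seq nat) := [&& uniq p, size p == 5 & all (fun i => i < n) p].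
Definition forb := [:: matN 5 c5N; matN 5 houseN; matN 5 gemN].
Definition badc cs M := let Mc := cmat M in
  sany (fun p => if valid (size M) p then
     sany (fun FM => if iso5 M FM p then true else iso5 Mc FM p) forb else false) cs.
Definition bad M := badc (cands (size M)) M.
Fixpoint allb (n : nat) (P : seq bool -> bool) : bool :=
  if n is n'.+1 then (if allb n' (fun s => P (true :: s)) then allb n' (fun s => P (false :: s)) else false)
  else P [::].
Lemma allbP n P : allb n P -> forall s, size s = n -> P s.
Proof.
elim: n P => [|n IH] P /=; first by move=> H [].
case E1: (allb _ _) => // H2 [|b s] //= [Hs].
by case: b; [apply: (IH _ E1) | apply: (IH _ H2)].
Qed.

Definition P4M := [:: [:: false;true;false;false]; [:: true;false;true;false];
  [:: false;true;false;true]; [:: false;false;true;false]].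
Definition tp (i : nat) := let r := nth [::] P4M i in [:: set_nth false r i false; set_nth false r i true].
Definition Bpat := [:: false; true; true; false].
Definition cfg6 bx bz (b : bool) :=
  [seq nth [::] P4M k ++ [:: nth false bx k; nth false bz k] | k <- iota 0 4] ++
  [:: bx ++ [:: false; b]; bz ++ [:: b; false]].
Definition cfg5 bx :=
  [seq nth [::] P4M k ++ [:: nth false bx k] | k <- iota 0 4] ++ [:: bx ++ [:: false]].
Definition mod6 := let cs := cands 6 in allb 9 (fun s =>
  let bx := take 4 s in let bz := take 4 (drop 4 s) in let b := nth false s 8 in
  sall (fun i => if bx \in tp i then if bz \in tp i then true else
      if badc cs (cfg6 bx bz b) then true else (b == nth false bz i) else true) (iota 0 4)).
Lemma mod6_ok : mod6 = true. Proof. vm_compute. reflexivity. Qed.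
Definition pat5 := allb 4 (fun bx => if bad (cfg5 bx) then true else
   (bx == Bpat) || has (fun i => bx \in tp i) (iota 0 4)).
Lemma pat5_ok : pat5 = true. Proof. vm_compute. reflexivity. Qed.
Lemma gem_ok b : bad (cfg5 [:: b; b; b; b]) = true. Proof. case: b; vm_compute; reflexivity. Qed.
Definition tpoff := all (fun i => all (fun j => all (fun s => (i == j) || (nth false s j == entry P4M i j)) (tp i)) (iota 0 4)) (iota 0 4).
Lemma tpoff_ok : tpoff = true. Proof. vm_compute. reflexivity. Qed.

Lemma module6 bx bz b i : size bx = 4 -> size bz = 4 -> i < 4 -> bx \in tp i -> bz \notin tp i ->
  bad (cfg6 bx bz b) = false -> b = nth false bz i.
Proof.
move=> Hx Hz Hi Hbx Hbz Hb.
have := allbP mod6_ok (s := bx ++ bz ++ [:: b]).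
rewrite !size_cat Hx Hz => /(_ erefl).
rewrite take_size_cat // drop_size_cat // take_size_cat // nth_cat Hx /= nth_cat Hz /=.
have Hm : i \in iota 0 4 by rewrite mem_iota.
rewrite sallE => /allP /(_ i Hm); rewrite Hbx (negbTE Hbz).
by rewrite /bad size_cat size_map size_iota /= in Hb; rewrite Hb => /eqP.
Qed.

Lemma pattern5 bx : size bx = 4 -> bad (cfg5 bx) = false ->
  bx = Bpat \/ exists2 i, i < 4 & bx \in tp i.
Proof.
move=> Hx Hb; have := allbP pat5_ok Hx; rewrite Hb => /orP [/eqP ->|/hasP [i]]; first by left.
by rewrite mem_iota => /andP [_ Hi] H; right; exists i.
Qed.

Lemma entry_cmat M i j : i < size M -> j < size M -> entry (cmat M) i j = (i != j) && ~~ entry M i j.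
Proof.
move=> Hi Hj; rewrite {1}/entry /cmat (nth_map 0) ?size_iota // (nth_map 0) ?size_iota //.
by rewrite !nth_iota // !add0n.
Qed.

Lemma entry_matN n F i j : i < n -> j < n -> entry (matN n F) i j = F i j.
Proof.
move=> Hi Hj; rewrite /entry /matN (nth_map 0) ?size_iota // (nth_map 0) ?size_iota //.
by rewrite !nth_iota // !add0n.
Qed.

Section Graph.
Variables (T : finType).

Definition matrix (g : rel T) vs := [seq [seq g a b | b <- vs] | a <- vs].

Lemma entry_mat g vs x0 i j : i < size vs -> j < size vs ->
  entry (matrix g vs) i j = g (nth x0 vs i) (nth x0 vs j).
Proof. by move=> Hi Hj; rewrite /entry (nth_map x0) // (nth_map x0). Qed.

Lemma iso5_sound (Fn : nat -> nat -> bool) (F : rel 'I_5) (HF : forall i j : 'I_5, F i j = Fn i j)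
  M (g : rel T) vs x0 p :
  uniq vs -> valid (size vs) p -> iso5 M (matN 5 Fn) p ->
  (forall i j, i < size vs -> j < size vs -> entry M i j = g (nth x0 vs i) (nth x0 vs j)) ->
  has_induced F g.
Proof.
move=> Hu /and3P [Hpu /eqP Hps Hpa] Hiso HM.
have Hlt : forall i : 'I_5, nth 0 p i < size vs.
  by move=> i; apply: (allP Hpa); apply: mem_nth; rewrite Hps.
exists (fun i : 'I_5 => nth x0 vs (nth 0 p i)); split.
  move=> i j /eqP; rewrite nth_uniq ?Hlt // nth_uniq ?Hps // => /eqP H.
  exact: val_inj.
move=> i j; rewrite -HM ?Hlt // HF.
move: Hiso; rewrite /iso5 sallE => /allP /(_ i); rewrite mem_iota leq0n add0n ltn_ord => /(_ erefl).
rewrite sallE => /allP /(_ j); rewrite mem_iota leq0n add0n ltn_ord => /(_ erefl) /eqP ->.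
by rewrite entry_matN.
Qed.

Lemma noBad (e : rel T) : distance_hereditary e -> distance_hereditary (compl e) ->
  forall (x0 : T) vs, uniq vs -> bad (matrix e vs) = false.
Proof.
move=> [C1 [H1 [_ G1]]] [C2 [H2 [_ G2]]] x0 vs Hu.
have HM : forall i j, i < size vs -> j < size vs -> entry (matrix e vs) i j = e (nth x0 vs i) (nth x0 vs j).
  by move=> i j; apply: entry_mat.
have HMc : forall i j, i < size vs -> j < size vs ->
    entry (cmat (matrix e vs)) i j = compl e (nth x0 vs i) (nth x0 vs j).
  move=> i j Hi Hj; rewrite entry_cmat ?size_map // HM // /compl nth_uniq //.
apply/negbTE/negP; rewrite /bad /badc sanyE => /hasP [p _].
rewrite size_map; case: ifP => // Hv; rewrite sanyE => /hasP [FM].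
rewrite !inE => /or3P [] /eqP -> ; case: ifP => [Hi _ | _ Hi].
- by apply: (C1 5 (leqnn 5)); apply: (@iso5_sound c5N _ _ _ _ _ x0 p Hu Hv Hi HM).
- by apply: (C2 5 (leqnn 5)); apply: (@iso5_sound c5N _ _ _ _ _ x0 p Hu Hv Hi HMc).
- by apply: H1; apply: (@iso5_sound houseN _ _ _ _ _ x0 p Hu Hv Hi HM).
- by apply: H2; apply: (@iso5_sound houseN _ _ _ _ _ x0 p Hu Hv Hi HMc).
- by apply: G1; apply: (@iso5_sound gemN _ _ _ _ _ x0 p Hu Hv Hi HM).
- by apply: G2; apply: (@iso5_sound gemN _ _ _ _ _ x0 p Hu Hv Hi HMc).
Qed.

End Graph.

Section G.
Variables (T : finType).

Definition twinfree (e : rel T) (S : {set T}) := forall u v, ~~ twins_in e S u v.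
Definition p4 (e : rel T) a b c d := [&& e a b, e b c, e c d, ~~ e a c, ~~ e a d & ~~ e b d].
Definition p4in (e : rel T) (S : {set T}) := exists a b c d, [/\ a \in S, b \in S, c \in S, d \in S & p4 e a b c d].
Definition modul (e : rel T) (S M : {set T}) :=
  M \subset S /\ forall y y' z, y \in M -> y' \in M -> z \in S -> z \notin M -> e y z = e y' z.
Definition part (e : rel T) (S A : {set T}) fl := [/\ A \subset S, A != set0, ~~ (S \subset A) &
  forall a b, a \in A -> b \in S -> b \notin A -> e a b = fl].

Lemma module_twinfree e S M : modul e S M -> twinfree e S -> twinfree e M.
Proof.
move=> [HMS HM] Htf u v; apply/negP => /and4P [Hu Hv Huv /forallP H].
move/negP: (Htf u v); apply; apply/and4P; split; try exact: (subsetP HMS); first done.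
apply/forallP => w; apply/implyP => Hw; apply/implyP => Hwu; apply/implyP => Hwv.
case Hm: (w \in M); first by move: (H w); rewrite Hm Hwu Hwv.
by rewrite (HM u v w) ?Hm.
Qed.

Lemma complS (e : rel T) : symmetric e -> symmetric (compl e).
Proof. by move=> eS x y; rewrite /compl eq_sym eS. Qed.
Lemma complI (e : rel T) : irreflexive (compl e).
Proof. by move=> x; rewrite /compl eqxx. Qed.

Lemma p4_compl (e : rel T) : symmetric e -> forall a b c d, p4 (compl e) a b c d -> p4 e b d a c.
Proof.
move=> eS a b c d /andP [h1 /andP [h2 /andP [h3 /andP [h4 /andP [h5 h6]]]]].
have cS := complS eS.
have ac : a != c by apply/eqP => E; subst c; rewrite h3 in h5.
have ad : a != d by apply/eqP => E; subst d; rewrite cS h1 in h6.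
have bd : b != d by apply/eqP => E; subst d; rewrite h1 in h5.
move: h1 h2 h3 h4 h5 h6; rewrite /compl /p4 ac ad bd /= !negbK.
move=> /andP [_ h1] /andP [_ h2] /andP [_ h3] h4 h5 h6.
by rewrite h6 (eS d a) h5 h4 (eS b a) h1 h2 (eS d c) h3.
Qed.

Lemma p4in_compl (e : rel T) : symmetric e -> forall S, ~ p4in e S -> ~ p4in (compl e) S.
Proof.
move=> eS S H [a [b [c [d [Ha Hb Hc Hd Hp]]]]]; apply: H.
by exists b, d, a, c; split => //; apply: p4_compl.
Qed.

Lemma sub4 (e : rel T) (eS : symmetric e) (S : {set T}) (v : T) (X Y : {set T}) (w u : T) :
  v \in S -> (forall x, x \in S :\ v -> (x \in X) || (x \in Y)) -> X :|: Y \subset S :\ v ->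
  (forall x y, x \in X -> y \in Y -> ~~ e x y) -> w \in Y -> e v w -> u \in X -> ~~ e v u ->
  ~ p4in e S -> exists A fl, part e S A fl.
Proof.
move=> HvS Hcov HXY Hanti Hw Hvw Hu Hvu Hno.
have HX : forall x, x \in X -> x \in S :\ v by move=> x Hx; apply: (subsetP HXY); rewrite inE Hx.
have HY : forall x, x \in Y -> x \in S :\ v by move=> x Hx; apply: (subsetP HXY); rewrite inE Hx orbT.
exists [set x in X | ~~ e v x], false; split.
- by apply/subsetP => x; rewrite inE => /andP [/HX]; rewrite inE => /andP [].
- by apply/set0Pn; exists u; rewrite inE Hu.
- apply/subsetPn; exists v => //; rewrite inE; apply/negP => /andP [/HX]; by rewrite !inE eqxx.
move=> a b; rewrite inE => /andP [Ha Hva] Hb Hbn.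
case: (eqVneq b v) => [->|Hbv]; first by rewrite eS (negbTE Hva).
have HbS : b \in S :\ v by rewrite in_setD1 Hb andbT; apply/eqP => E; move: Hbv; rewrite E eqxx.
case/orP: (Hcov b HbS) => Hb'; last by apply/negbTE/Hanti.
move: Hbn; rewrite inE Hb' /= negbK => Hvb.
apply/negbTE/negP => Hab; apply: Hno.
have := HX a Ha; have := HY w Hw; rewrite !inE => /andP [_ HwS] /andP [_ HaS].
exists a, b, v, w; split => //.
by rewrite /p4 Hab (eS b v) Hvb Hvw (eS a v) Hva (Hanti a w Ha Hw) (Hanti b w Hb' Hw).
Qed.

Lemma part_step (e : rel T) (eS : symmetric e) (S : {set T}) (v : T) (A' : {set T}) : v \in S -> part e (S :\ v) A' false -> ~ p4in e S ->
  exists A fl, part e S A fl.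
Proof.
move=> HvS [HA'S HA'0 HA'n HA'] Hno.
have HA'S' : forall x, x \in A' -> x \in S :\ v by move=> x; apply: (subsetP HA'S).
case: (boolP [forall x in S :\ v, e v x]) => [/forallP Hall | /forallPn [u]].
  exists [set v], true; split.
  - by rewrite sub1set.
  - by apply/set0Pn; exists v; rewrite inE.
  - case/set0Pn: HA'0 => a /HA'S'; rewrite !inE => /andP [Hav HaS].
    by apply/subsetPn; exists a; rewrite // inE.
  move=> a b; rewrite inE => /eqP -> Hb Hbv; apply: (implyP (Hall b)).
  by rewrite !inE Hb andbT; rewrite inE in Hbv.
rewrite negb_imply => /andP [HuS Hvu].
case: (boolP [forall a in A', ~~ e v a]) => [/forallP Hall1 | /forallPn [a0]].
  exists A', false; split => //.
  - by apply: (subset_trans HA'S); apply: subsetDl.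
  - apply/subsetPn; exists v => //; apply/negP => /HA'S'; by rewrite !inE eqxx.
  move=> a b Ha Hb Hba; case: (eqVneq b v) => [->|Hbv].
    by rewrite eS; move: (Hall1 a); rewrite Ha => /negbTE.
  by apply: HA' => //; rewrite in_setD1 Hbv.
rewrite negb_imply negbK => /andP [Ha0 Hva0].
case: (boolP [forall b in (S :\ v) :\: A', ~~ e v b]) => [/forallP Hall2 | /forallPn [b0]].
  exists (v |: A'), false; split.
  - by rewrite subUset sub1set HvS (subset_trans HA'S) // subsetDl.
  - by apply/set0Pn; exists v; rewrite !inE eqxx.
  - case/subsetPn: HA'n => b Hb HbA; apply/subsetPn; exists b.
      by move: Hb; rewrite inE => /andP [].
    move: Hb; rewrite !inE => /andP [Hbv _]; by rewrite negb_or Hbv HbA.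
  move=> a b; rewrite !inE negb_or => /orP [/eqP ->|Ha] Hb /andP [Hbv HbA].
    by move: (Hall2 b); rewrite !inE Hbv Hb HbA /= => /negbTE.
  by apply: HA' => //; rewrite in_setD1 Hbv.
rewrite negb_imply negbK => /andP [Hb0 Hvb0].
have Hcov : forall x, x \in S :\ v -> (x \in A') || (x \in (S :\ v) :\: A').
  by move=> x Hx; rewrite inE Hx andbT orbN.
have Hanti : forall x y, x \in A' -> y \in (S :\ v) :\: A' -> ~~ e x y.
  by move=> x y Hx; rewrite inE => /andP [Hy1 Hy2]; rewrite HA'.
have Hsub : A' :|: (S :\ v) :\: A' \subset S :\ v by rewrite subUset HA'S subsetDl.
case/orP: (Hcov u HuS) => HuX.
  exact: (sub4 eS HvS Hcov Hsub Hanti Hb0 Hvb0 HuX Hvu Hno).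
apply: (sub4 eS HvS (X := (S :\ v) :\: A') (Y := A') _ _ _ Ha0 Hva0 HuX Hvu Hno).
- by move=> x Hx; rewrite orbC; apply: Hcov.
- by rewrite setUC.
- by move=> x y Hx Hy; rewrite eS; apply: Hanti.
Qed.


Lemma p4in_sub (e : rel T) (S S' : {set T}) : S' \subset S -> p4in e S' -> p4in e S.
Proof.
move=> /subsetP H [a [b [c [d [Ha Hb Hc Hd Hp]]]]].
by exists a, b, c, d; split => //; apply: H.
Qed.

Lemma partition (e : rel T) (eS : symmetric e) : forall n (S : {set T}), #|S| = n.+2 -> ~ p4in e S ->
  exists A fl, part e S A fl.
Proof.
elim=> [|n IH] S HS Hno.
  move/eqP: HS => /cards2P [x [y [Hxy ->]]].
  exists [set x], (e x y); split.
  - by rewrite sub1set !inE eqxx.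
  - by apply/set0Pn; exists x; rewrite inE.
  - apply/subsetPn; exists y; first by rewrite !inE eqxx orbT.
    by rewrite inE eq_sym.
  move=> a b; rewrite !inE => /eqP -> /orP [/eqP ->|/eqP ->]; first by rewrite eqxx.
  done.
have [v Hv] : exists v, v \in S by apply/card_gt0P; rewrite HS.
have HS' : #|S :\ v| = n.+2 by move: HS; rewrite (cardsD1 v) Hv => [[]].
have Hno' : ~ p4in e (S :\ v) by move=> H; apply: Hno; apply: p4in_sub H; apply: subsetDl.
case: (IH _ HS' Hno') => A' [[] Hp].
  have Hp' : part (compl e) (S :\ v) A' false.
    case: Hp => H1 H2 H3 H4; split => // a b Ha Hb Hba.
    by rewrite /compl H4 // andbF.
  case: (part_step (complS eS) Hv Hp' (p4in_compl eS Hno)) => A [fl [H1 H2 H3 H4]].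
  exists A, (~~ fl); split => // a b Ha Hb Hba.
  have Hab : a != b by apply/eqP => E; rewrite -E Ha in Hba.
  by have := H4 a b Ha Hb Hba; rewrite /compl Hab /= => <-; rewrite negbK.
exact: (part_step eS Hv Hp Hno).
Qed.

Lemma p4_exists (e : rel T) (eS : symmetric e) : forall n (S : {set T}), #|S| <= n -> 1 < #|S| ->
  twinfree e S -> p4in e S.
Proof.
elim=> [|n IH] S Hn H1 Htf; first by move: (leq_trans H1 Hn).
case: (classic (p4in e S)) => // Hno; exfalso.
have Hk : #|S| = (#|S|.-2).+2 by move: H1; case: #|S| => [|[|k]].
case: (partition eS Hk Hno) => A [fl [HAS HA0 HAn HA]].
have prA : A \proper S by rewrite properE HAS HAn.
case/set0Pn: (HA0) => a Ha.
have prB : (S :\: A) \proper S.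
  rewrite properE subsetDl; apply/subsetPn; exists a; first exact: (subsetP HAS).
  by rewrite inE Ha.
have Hlt : forall M : {set T}, M \proper S -> #|M| <= n.
  by move=> M HM; rewrite -ltnS; apply: leq_trans (proper_card HM) Hn.
case: (ltnP 1 #|A|) => HA1.
  have HM : modul e S A by split => // y y' z Hy Hy' Hz Hzn; rewrite !HA.
  apply: Hno; apply: (p4in_sub HAS); apply: IH => //; first exact: Hlt.
  exact: module_twinfree HM Htf.
case: (ltnP 1 #|S :\: A|) => HB1.
  have HM : modul e S (S :\: A).
    split; first exact: subsetDl.
    move=> y y' z; rewrite !inE => /andP [Hy1 Hy2] /andP [Hy'1 Hy'2] Hz; rewrite Hz andbT negbK => Hz'.
    by rewrite eS (HA z y) // (eS y') (HA z y').
  apply: Hno; apply: (p4in_sub (subsetDl S A)); apply: IH => //; first exact: Hlt.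
  exact: module_twinfree HM Htf.
have HA1' : #|A| = 1 by apply/eqP; rewrite eqn_leq HA1 card_gt0; apply/set0Pn; exists a.
have Hsum := cardsID A S; rewrite (setIidPr HAS) in Hsum.
have HB1' : #|S :\: A| = 1.
  apply/eqP; rewrite eqn_leq HB1 /=; move: H1; rewrite -Hsum HA1'.
  by case: #|S :\: A|.
case/cards1P: (introT eqP HA1') => a' HA'; case/cards1P: (introT eqP HB1') => b HB.
have Hb : b \in S :\: A by rewrite HB inE.
have Ha' : a' \in A by rewrite HA' inE.
move: (Htf a' b); apply/negP/negPn; apply/and4P; split.
- exact: (subsetP HAS).
- by move: Hb; rewrite inE => /andP [].
- by apply/eqP => E; move: Hb; rewrite inE -E Ha'.
apply/forallP => w; apply/implyP => Hw; apply/implyP => Hwa; apply/implyP => Hwb.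
case: (boolP (w \in A)) => HwA; first by move: HwA Hwa; rewrite HA' inE => ->.
have : w \in S :\: A by rewrite inE HwA.
by rewrite HB inE (negbTE Hwb).
Qed.

End G.

Definition bullN := edgesN [:: (0,1); (1,2); (2,0); (0,3); (1,4)].

Section D.
Variables (T : finType) (e : rel T).
Hypotheses (eS : symmetric e) (eI : irreflexive e)
  (hN : forall (x0 : T) vs, uniq vs -> bad (matrix e vs) = false).

Lemma p4_uniq a b c d : p4 e a b c d -> uniq [:: a; b; c; d].
Proof.
case/andP => h1 /andP [h2 /andP [h3 /andP [h4 /andP [h5 h6]]]].
have ab : a != b by apply/eqP => E; rewrite E eI in h1.
have bc : b != c by apply/eqP => E; rewrite E eI in h2.
have cd : c != d by apply/eqP => E; rewrite E eI in h3.
have ac : a != c by apply/eqP => E; rewrite E h3 in h5.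
have ad : a != d by apply/eqP => E; rewrite E eS in h1; rewrite h1 in h6.
have bd : b != d by apply/eqP => E; rewrite -E h1 in h5.
by rewrite /= !inE !negb_or ab ac ad bc bd cd.
Qed.

Lemma no_module S M : twinfree e S -> modul e S M -> 1 < #|M| -> ~~ (S \subset M) -> False.
Proof.
move=> Htf HM H1 /subsetPn [w HwS HwM].
have HMS := HM.1.
case: (p4_exists eS (leqnn _) H1 (module_twinfree HM Htf)) => a [b [c [d [Ha Hb Hc Hd Hp]]]].
have Hu : uniq [:: a; b; c; d; w].
  have := p4_uniq Hp; rewrite /= !inE !negb_or => /and4P [/and3P [-> -> ->] /andP [-> ->] -> _] /=.
  have nw : forall x, x \in M -> x != w by move=> x Hx; apply/eqP => E; rewrite -E Hx in HwM.
  by rewrite !nw.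
have Hbw : e b w = e a w by apply: HM.2.
have Hcw : e c w = e a w by apply: HM.2.
have Hdw : e d w = e a w by apply: HM.2.
case/andP: Hp => h1 /andP [h2 /andP [h3 /andP [h4 /andP [h5 h6]]]].
have E : matrix e [:: a; b; c; d; w] = cfg5 [:: e a w; e a w; e a w; e a w].
  rewrite /matrix /cfg5 /= !eI (eS b a) (eS c a) (eS c b) (eS d a) (eS d b) (eS d c).
  rewrite (eS w a) (eS w b) (eS w c) (eS w d) Hbw Hcw Hdw h1 h2 h3 (negbTE h4) (negbTE h5) (negbTE h6).
  done.
by have := hN a Hu; rewrite E gem_ok.
Qed.

Lemma embed (S : {set T}) (vs : seq T) (q : seq nat) : uniq vs -> (forall y, y \in S -> y \in vs) -> size q = size vs -> uniq q ->
  all (fun a => a < 5) q -> matrix e vs = [seq [seq bullN a b | b <- q] | a <- q] ->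
  iso_induced_sub e S bull.
Proof.
move=> Hu HS Hq Hqu Hqa HM.
have Hidx : forall y, y \in S -> index y vs < size vs by move=> y /HS; rewrite index_mem.
have Hq5 : forall y, y \in S -> nth 0 q (index y vs) < 5.
  by move=> y Hy; apply: (allP Hqa); apply: mem_nth; rewrite Hq Hidx.
exists (fun y => inord (nth 0 q (index y vs)) : 'I_5); split.
  move=> y y' Hy Hy' /(congr1 val) /=; rewrite !inordK ?Hq5 // => /eqP.
  rewrite nth_uniq ?Hq ?Hidx // => /eqP Hi.
  by rewrite -(nth_index y (HS _ Hy)) Hi nth_index // HS.
move=> y y' Hy Hy'.
change (bullN (inord (nth 0 q (index y vs)) : 'I_5) (inord (nth 0 q (index y' vs)) : 'I_5) = e y y').
rewrite !inordK ?Hq5 //.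
rewrite -{2}(nth_index y (HS _ Hy)) -{2}(nth_index y (HS _ Hy')) -entry_mat ?Hidx // HM.
by rewrite /entry (nth_map 0) ?Hq ?Hidx // (nth_map 0) ?Hq ?Hidx.
Qed.


Lemma crux (S : {set T}) : twinfree e S -> 1 < #|S| -> iso_induced_sub e S bull.
Proof.
move=> Htf H1.
case: (p4_exists eS (leqnn _) H1 Htf) => p1 [p2 [p3 [p4' [H1S H2S H3S H4S Hp]]]].
have Hpu := p4_uniq Hp.
case/andP: (Hp) => h12 /andP [h23 /andP [h34 /andP [n13 /andP [n14 n24]]]].
move: n13 n14 n24 => /negbTE n13 /negbTE n14 /negbTE n24.
set ps := [:: p1; p2; p3; p4'].
have HpsS : forall x, x \in ps -> x \in S by move=> x; rewrite !inE => /or4P [] /eqP ->.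
have HPM : matrix e ps = P4M.
  by rewrite /matrix /= !eI (eS p2 p1) (eS p3 p1) (eS p3 p2) (eS p4' p1) (eS p4' p2) (eS p4' p3) h12 h23 h34 n13 n14 n24.
have Hent : forall i j, i < 4 -> j < 4 -> e (nth p1 ps i) (nth p1 ps j) = entry P4M i j.
  by move=> i j Hi Hj; rewrite -HPM; symmetry; apply: entry_mat.
pose pat y := map (e y) ps.
have Hnth : forall y j, j < 4 -> nth false (pat y) j = e y (nth p1 ps j).
  by move=> y j Hj; rewrite (nth_map p1).
have Hu5 : forall y, y \notin ps -> uniq (ps ++ [:: y]).
  by move=> y Hy; rewrite cat_uniq Hpu /= orbF Hy.
have Hu6 : forall y z, y \notin ps -> z \notin ps -> y != z -> uniq (ps ++ [:: y; z]).
  by move=> y z Hy Hz Hyz; rewrite cat_uniq Hpu /= orbF negb_or Hy Hz inE Hyz.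
have E5 : forall y, matrix e (ps ++ [:: y]) = cfg5 (pat y).
  move=> y; rewrite /matrix /cfg5 /pat /= !eI (eS p2 p1) (eS p3 p1) (eS p3 p2) (eS p4' p1) (eS p4' p2).
  by rewrite (eS p4' p3) h12 h23 h34 n13 n14 n24 (eS p1 y) (eS p2 y) (eS p3 y) (eS p4' y).
have E6 : forall y z, matrix e (ps ++ [:: y; z]) = cfg6 (pat y) (pat z) (e y z).
  move=> y z; rewrite /matrix /cfg6 /pat /= !eI (eS p2 p1) (eS p3 p1) (eS p3 p2) (eS p4' p1) (eS p4' p2).
  rewrite (eS p4' p3) h12 h23 h34 n13 n14 n24 (eS p1 y) (eS p2 y) (eS p3 y) (eS p4' y).
  by rewrite (eS p1 z) (eS p2 z) (eS p3 z) (eS p4' z) (eS z y).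
have Hpat : forall y, y \notin ps -> pat y = Bpat \/ exists2 i, i < 4 & pat y \in tp i.
  move=> y Hy; apply: pattern5; first by rewrite size_map.
  by rewrite -E5; apply: hN p1 _ (Hu5 _ Hy).
have Hm6 : forall y z i, y \notin ps -> z \notin ps -> y != z -> i < 4 -> pat y \in tp i ->
    pat z \notin tp i -> e y z = e (nth p1 ps i) z.
  move=> y z i Hy Hz Hyz Hi Hty Htz.
  have Hb : bad (cfg6 (pat y) (pat z) (e y z)) = false.
    by rewrite -E6; apply: hN p1 _ (Hu6 _ _ Hy Hz Hyz).
  have Hs : forall w, size (pat w) = 4 by move=> w; rewrite size_map.
  by rewrite (module6 (Hs y) (Hs z) Hi Hty Htz Hb) Hnth // eS.
have HnoA : forall y i, y \in S -> y \notin ps -> i < 4 -> pat y \in tp i -> False.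
  move=> y i Hy Hyn Hi Hty.
  pose pi := nth p1 ps i.
  pose M := [set x in S | (x == pi) || ((x \notin ps) && (pat x \in tp i))].
  have HpiS : pi \in S by apply: HpsS; apply: mem_nth.
  have K : forall x z, x \in M -> z \in S -> z \notin M -> e x z = e pi z.
    move=> x z; rewrite !in_set => /andP [HxS /orP [/eqP -> //|/andP [Hxn Hxt]]] HzS.
    rewrite HzS /= negb_or => /andP [Hzi Hzo].
    case: (boolP (z \in ps)) => Hzp.
      have Hj : index z ps < 4 by rewrite -index_mem in Hzp.
      rewrite -(nth_index p1 Hzp) -Hnth // Hent //.
      move: tpoff_ok; rewrite /tpoff => /allP /(_ i); rewrite mem_iota leq0n add0n Hi => /(_ erefl).
      move=> /allP /(_ (index z ps)); rewrite mem_iota leq0n add0n Hj => /(_ erefl).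
      move=> /allP /(_ _ Hxt) /orP [/eqP Eij|/eqP //].
      by move: Hzi; rewrite /pi Eij nth_index // eqxx.
    have Hxz : x != z by apply/eqP => E; move: Hzo; rewrite -E Hxn Hxt.
    by apply: Hm6 => //; move: Hzo; rewrite Hzp.
  have HMm : modul e S M.
    split; first by apply/subsetP => x; rewrite in_set => /andP [].
    by move=> y1 y2 z Hy1 Hy2 Hz Hzn; rewrite !K.
  have Hk : (if i == 0 then 1 else 0) != i.
    by case: (eqVneq i 0) => [->|Hi0] //; rewrite eq_sym.
  apply: (no_module Htf HMm).
  - apply/card_gt1P; exists pi, y; split.
    + by rewrite in_set HpiS eqxx.
    + by rewrite in_set Hy Hyn Hty orbT.
    + by apply/eqP => E; move: Hyn; rewrite -E /pi mem_nth.
  - apply/subsetPn; exists (nth p1 ps (if i == 0 then 1 else 0)).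
    + by apply: HpsS; apply: mem_nth; case: (i == 0).
    + rewrite in_set negb_and; apply/orP; right; rewrite negb_or mem_nth; last by case: (i == 0).
      by rewrite andbT /pi nth_uniq //; case: (i == 0).
have HB : forall y, y \in S -> y \notin ps -> pat y = Bpat.
  move=> y Hy Hyn; case: (Hpat y Hyn) => // [[i Hi Hti]]; exfalso; exact: (HnoA y i Hy Hyn Hi Hti).
have Hone : forall y z, y \in S -> z \in S -> y \notin ps -> z \notin ps -> y = z.
  move=> y z Hy Hz Hyn Hzn; case: (eqVneq y z) => // Hyz; exfalso.
  pose M := [set x in S | x \notin ps].
  have HMm : modul e S M.
    split; first by apply/subsetP => x; rewrite in_set => /andP [].
    move=> y1 y2 w; rewrite !in_set => /andP [Hy1 Hy1n] /andP [Hy2 Hy2n] Hw; rewrite Hw /= negbK => Hwp.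
    have Hj : index w ps < 4 by rewrite -index_mem in Hwp.
    by rewrite -(nth_index p1 Hwp) -!Hnth // !HB.
  apply: (no_module Htf HMm).
  - by apply/card_gt1P; exists y, z; rewrite !in_set Hy Hz Hyn Hzn.
  - by apply/subsetPn; exists p1 => //; rewrite in_set mem_head andbF.
case: (pickP [pred x in S | x \notin ps]) => [x /andP [HxS Hxn] | Hnone].
  apply: (embed (vs := ps ++ [:: x]) (q := [:: 3;0;1;4;2])) => //.
  - exact: Hu5.
  - move=> y Hy; rewrite mem_cat; case: (boolP (y \in ps)) => //= Hyn.
    by rewrite inE (Hone y x).
  - have := HB x HxS Hxn; rewrite /pat /= => [[f1 f2 f3 f4]].
    rewrite /matrix /= !eI (eS p2 p1) (eS p3 p1) (eS p3 p2) (eS p4' p1) (eS p4' p2).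
    by rewrite (eS p4' p3) h12 h23 h34 n13 n14 n24 (eS p1 x) (eS p2 x) (eS p3 x) (eS p4' x) f1 f2 f3 f4.
apply: (embed (vs := ps) (q := [:: 3;0;1;4])) => //.
- move=> y Hy; case: (boolP (y \in ps)) => // Hyn.
  by move: (Hnone y); rewrite /= Hy Hyn.
Qed.

End D.

Definition sN n x := if x.+1 == n then 0 else x.+1.
Definition pN n x := if x == 0 then n.-1 else x.-1.

Lemma arith2 n a b : 5 <= n -> a < n -> b < n -> a != b ->
  (sN n a != a -> sN n a != b -> true = (sN n a == sN n b) || (sN n a == pN n b)) ->
  (pN n a != a -> pN n a != b -> true = (pN n a == sN n b) || (pN n a == pN n b)) -> False.
Proof.
rewrite /sN /pN; case: (a.+1 =P n); case: (b.+1 =P n); case: (a =P 0); case: (b =P 0); intros; lia.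
Qed.

Lemma modS n x : x < n -> x.+1 %% n = sN n x.
Proof.
move=> Hx; rewrite /sN; case: eqP => [->|H]; first by rewrite modnn.
by rewrite modn_small //; lia.
Qed.

Lemma sp_iff n x y : x < n -> y < n -> (x == sN n y) = (y == pN n x).
Proof.
move=> Hx Hy; rewrite /sN /pN.
case: (y.+1 =P n); case: (x =P 0); case: (x =P y.+1); case: (y =P n.-1); case: (y =P x.-1);
  intros; try done; exfalso; lia.
Qed.

Lemma cyc_sp n (i j : 'I_n) : cycle_rel n i j = (val j == sN n i) || (val j == pN n i).
Proof.
rewrite /cycle_rel !modS; try exact: ltn_ord.
change ((nat_of_ord j == sN n i) || (nat_of_ord i == sN n j) = (nat_of_ord j == sN n i) || (nat_of_ord j == pN n i)).
by congr (_ || _); apply: sp_iff; apply: ltn_ord.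
Qed.

Lemma sN_lt n x : x < n -> sN n x < n. Proof. rewrite /sN; case: eqP; lia. Qed.
Lemma pN_lt n x : x < n -> pN n x < n. Proof. rewrite /pN; case: eqP; lia. Qed.

Lemma cyc_tf n (Hn : 5 <= n) (a b : 'I_n) : a != b ->
  exists w : 'I_n, [/\ w != a, w != b & cycle_rel n a w != cycle_rel n b w].
Proof.
move=> Hab; apply: NNPP => Hno.
have H : forall w : 'I_n, w != a -> w != b -> cycle_rel n a w = cycle_rel n b w.
  move=> w Hwa Hwb; apply/eqP; apply/negPn/negP => Hne; apply: Hno; by exists w.
have := H (Ordinal (sN_lt (ltn_ord a))); have := H (Ordinal (pN_lt (ltn_ord a))).
rewrite !cyc_sp /= eqxx orbT -!val_eqE /= eqxx.
move=> H2 H1; apply: (arith2 Hn (ltn_ord a) (ltn_ord b) _ H1 H2).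
by move: Hab; rewrite -val_eqE.
Qed.


Definition twfN m (Fn : nat -> nat -> bool) := all (fun a => all (fun b => (a == b) ||
  has (fun w => [&& w != a, w != b & Fn a w != Fn b w]) (iota 0 m)) (iota 0 m)) (iota 0 m).
Definition dominoN := edgesN [:: (0,1); (1,2); (2,3); (3,4); (4,5); (5,0); (0,3)].

Lemma tf_small m (F : rel 'I_m) (Fn : nat -> nat -> bool) (HF : forall a b : 'I_m, F a b = Fn a b) : twfN m Fn ->
  forall a b : 'I_m, a != b -> exists w, [/\ w != a, w != b & F a w != F b w].
Proof.
move=> Htw a b Hab; move: Htw => /allP /(_ a); rewrite mem_iota leq0n add0n ltn_ord => /(_ erefl).
move=> /allP /(_ b); rewrite mem_iota leq0n add0n ltn_ord => /(_ erefl).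
rewrite val_eqE (negbTE Hab) /=.
case/hasP => w; rewrite mem_iota leq0n add0n => Hw /and3P [H1 H2 H3].
by exists (Ordinal Hw); rewrite -!val_eqE !HF.
Qed.

Lemma tf_house : twfN 5 houseN. Proof. vm_compute. reflexivity. Qed.
Lemma tf_gem : twfN 5 gemN. Proof. vm_compute. reflexivity. Qed.
Lemma tf_domino : twfN 6 dominoN. Proof. vm_compute. reflexivity. Qed.
Lemma bull_bad : bad (matN 5 bullN) = false. Proof. vm_compute. reflexivity. Qed.

Section Compl.
Variables (Fn : nat -> nat -> bool) (F : rel 'I_5).
Hypotheses (HF : forall a b : 'I_5, F a b = Fn a b) (HFin : matN 5 Fn \in forb).

Lemma emb_iso (M : seq (seq bool)) (h : rel 'I_5) (Hh : forall a b : 'I_5, h a b = entry M a b)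
  (f : 'I_5 -> 'I_5) : injective f -> (forall x y, h (f x) (f y) = F x y) ->
  let p := [seq val (f i) | i <- enum 'I_5] in
  [/\ valid 5 p, p \in permutations (iota 0 5) & iso5 M (matN 5 Fn) p].
Proof.
move=> finj Hf p.
have Hpu : uniq p by rewrite map_inj_uniq ?enum_uniq // => x y /val_inj /finj.
have Hps : size p = 5 by rewrite size_map size_enum_ord.
have Hpa : all (fun i => i < 5) p.
  by apply/allP => x; rewrite /p => /mapP [i _ ->]; apply: ltn_ord.
have Hnth : forall k, k < 5 -> nth 0 p k = val (f (inord k)).
  move=> k Hk; rewrite (nth_map ord0) ?size_enum_ord //.
  by rewrite -{1}(inordK Hk) nth_ord_enum.
split.
- by rewrite /valid Hpu Hps Hpa.
- rewrite mem_permutations; apply: uniq_perm; [done | exact: iota_uniq | ].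
  have Hsub : {subset p <= iota 0 5} by move=> x Hx; rewrite mem_iota leq0n add0n; apply: (allP Hpa).
  have Hsz : size (iota 0 5) <= size p by rewrite Hps size_iota.
  exact: (uniq_min_size Hpu Hsub Hsz).2.
rewrite /iso5 sallE; apply/allP => i; rewrite mem_iota leq0n add0n => Hi.
rewrite sallE; apply/allP => j; rewrite mem_iota leq0n add0n => Hj.
by rewrite !Hnth // -Hh Hf HF entry_matN // !inordK.
Qed.

Lemma bad_complete (M : seq (seq bool)) (HM : size M = 5) (g : rel 'I_5) :
  (forall a b : 'I_5, g a b = entry M a b) -> (has_induced F g \/ has_induced F (compl g)) -> bad M = true.
Proof.
move=> Hg Hh.
have Hc : forall a b : 'I_5, compl g a b = entry (cmat M) a b.
  by move=> a b; rewrite entry_cmat ?HM ?ltn_ord // /compl val_eqE Hg.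
rewrite /bad /badc HM sanyE.
case: Hh => [[f [finj Hf]] | [f [finj Hf]]].
  case: (emb_iso Hg finj Hf) => Hv Hp Hi.
  apply/hasP; exists [seq val (f i) | i <- enum 'I_5] => //; rewrite Hv sanyE.
  by apply/hasP; exists (matN 5 Fn) => //; rewrite Hi.
case: (emb_iso Hc finj Hf) => Hv Hp Hi.
apply/hasP; exists [seq val (f i) | i <- enum 'I_5] => //; rewrite Hv sanyE.
by apply/hasP; exists (matN 5 Fn) => //; rewrite Hi; case: ifP.
Qed.

Lemma nobull5 : ~ has_induced F bull /\ ~ has_induced F (compl bull).
Proof.
have Hb : forall a b : 'I_5, bull a b = entry (matN 5 bullN) a b.
  by move=> a b; rewrite entry_matN ?ltn_ord.
split => H; have := @bad_complete (matN 5 bullN) erefl bull Hb; rewrite bull_bad.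
- by move=> /(_ (or_introl H)).
- by move=> /(_ (or_intror H)).
Qed.

End Compl.

Lemma nobig m (F : rel 'I_m) (g : rel 'I_5) : 5 < m -> ~ has_induced F g.
Proof. by move=> Hm [f [finj _]]; have := leq_card f finj; rewrite !card_ord; lia. Qed.

Section F.
Variables (T : finType).

Definition noInd (U : finType) (F : rel U) (g : rel T) (S : {set T}) :=
  forall f : U -> T, injective f -> (forall x, f x \in S) -> ~ (forall x y, g (f x) (f y) = F x y).

Lemma twin_add (U : finType) (F : rel U) (g : rel T) (gS : symmetric g) (gI : irreflexive g)
  (Ftf : forall a b, a != b -> exists w, [/\ w != a, w != b & F a w != F b w]) (S : {set T}) v u :
  twins_in g S v u -> noInd F g (S :\ v) -> noInd F g S.
Proof.
move=> /and4P [HvS HuS Hvu /forallP Htw] Hno f finj fS Hf.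
have Htw' : forall w, w \in S -> w != v -> w != u -> g v w = g u w.
  by move=> w Hw Hwv Hwu; move: (Htw w); rewrite Hw Hwv Hwu => /eqP.
case: (pickP (fun a => f a == v)) => [a /eqP Ha | Hnv]; last first.
  apply: (Hno f finj) => // x; rewrite in_setD1 fS andbT; by move: (Hnv x) => /= ->.
case: (pickP (fun b => f b == u)) => [b /eqP Hb | Hnu].
  have Hab : a != b by apply/eqP => E; move: Hvu; rewrite -Ha -Hb E eqxx.
  case: (Ftf a b Hab) => w [Hwa Hwb HFw].
  move/negP: HFw; apply; rewrite -!Hf Ha Hb Htw' //.
  - by rewrite -Ha (inj_eq finj).
  - by rewrite -Hb (inj_eq finj).
pose f' := fun x => if x == a then u else f x.
have Hfy : forall y, y != a -> [/\ f y \in S, f y != v & f y != u].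
  move=> y Hya; split => //; first by rewrite -Ha (inj_eq finj).
  by move: (Hnu y) => /= ->.
apply: (Hno f').
- move=> x y; rewrite /f'; case: (eqVneq x a) => [->|Hxa]; case: (eqVneq y a) => [->|Hya] //.
  + by move=> E; case: (Hfy y Hya) => _ _; rewrite -E eqxx.
  + by move=> E; case: (Hfy x Hxa) => _ _; rewrite E eqxx.
  + exact: finj.
- move=> x; rewrite /f'; case: (eqVneq x a) => [_|Hxa]; first by rewrite in_setD1 HuS eq_sym Hvu.
  by case: (Hfy x Hxa) => H1 H2 _; rewrite in_setD1 H1 H2.
move=> x y; rewrite /f'; case: (eqVneq x a) => [->|Hxa]; case: (eqVneq y a) => [->|Hya].
- by rewrite -Hf Ha !gI.
- by case: (Hfy y Hya) => H1 H2 H3; rewrite -Hf Ha Htw'.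
- by case: (Hfy x Hxa) => H1 H2 H3; rewrite -Hf Ha [g (f x) u]gS [g (f x) v]gS Htw'.
- exact: Hf.
Qed.

Lemma twins_compl (e : rel T) S v u : twins_in e S v u -> twins_in (compl e) S v u.
Proof.
move=> /and4P [HvS HuS Hvu /forallP Htw]; apply/and4P; split => //.
apply/forallP => w; apply/implyP => Hw; apply/implyP => Hwv; apply/implyP => Hwu.
move: (Htw w); rewrite Hw Hwv Hwu /compl => /eqP ->.
by rewrite [v == w]eq_sym [u == w]eq_sym Hwv Hwu.
Qed.

Lemma elim_no (e : rel T) (U : finType) (F : rel U) (g : rel T) (gS : symmetric g) (gI : irreflexive g)
  (Ftf : forall a b, a != b -> exists w, [/\ w != a, w != b & F a w != F b w])
  (Htr : forall S v u, twins_in e S v u -> twins_in g S v u) S S' :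
  twin_elim e S S' -> noInd F g S' -> noInd F g S.
Proof.
elim=> [S0 //| S0 S1 v u Htw _ IH] H.
by apply: (twin_add gS gI Ftf (Htr _ _ _ Htw)); apply: IH.
Qed.

Lemma base_no (e : rel T) (U : finType) (F : rel U) S' : iso_induced_sub e S' bull ->
  ~ has_induced F bull -> ~ has_induced F (compl bull) -> noInd F e S' /\ noInd F (compl e) S'.
Proof.
move=> [g [ginj gH]] Hb1 Hb2; split => f finj fS Hf.
  apply: Hb1; exists (fun x => g (f x)); split.
    by move=> x y E; apply: finj; exact: (ginj _ _ (fS x) (fS y) E).
  by move=> x y; rewrite gH ?fS //; exact: Hf.
apply: Hb2; exists (fun x => g (f x)); split.
  by move=> x y E; apply: finj; exact: (ginj _ _ (fS x) (fS y) E).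
by move=> x y; rewrite -Hf /compl (inj_in_eq ginj) ?fS // gH ?fS.
Qed.

Lemma no_F (e : rel T) (eS : symmetric e) (eI : irreflexive e) (U : finType) (F : rel U)
  (Ftf : forall a b, a != b -> exists w, [/\ w != a, w != b & F a w != F b w])
  S' : twin_elim e [set: T] S' -> iso_induced_sub e S' bull ->
  ~ has_induced F bull -> ~ has_induced F (compl bull) ->
  ~ has_induced F e /\ ~ has_induced F (compl e).
Proof.
move=> Hel Hiso Hb1 Hb2; case: (base_no Hiso Hb1 Hb2) => N1 N2.
have M1 := elim_no eS eI Ftf (fun _ _ _ H => H) Hel N1.
have M2 := elim_no (complS eS) (@complI _ e) Ftf (@twins_compl e) Hel N2.
split => [[f [finj Hf]]|[f [finj Hf]]].
- by apply: (M1 f finj (fun x => in_setT _)).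
- by apply: (M2 f finj (fun x => in_setT _)).
Qed.

Lemma DH_of (e : rel T) (eS : symmetric e) (eI : irreflexive e) S' :
  twin_elim e [set: T] S' -> iso_induced_sub e S' bull ->
  distance_hereditary e /\ distance_hereditary (compl e).
Proof.
move=> Hel Hiso.
have Hcyc : forall n, 5 <= n -> ~ has_induced (cycle_rel n) e /\ ~ has_induced (cycle_rel n) (compl e).
  move=> n Hn; apply: (no_F eS eI (cyc_tf Hn) Hel Hiso).
  - case: (ltngtP n 5) => [H5|Hn5|E]; first by rewrite ltnNge Hn in H5.
    + exact: nobig.
    + by subst n; exact: (nobull5 (Fn := c5N) (F := cycle_rel 5) (fun _ _ => erefl) erefl).1.
  - case: (ltngtP n 5) => [H5|Hn5|E]; first by rewrite ltnNge Hn in H5.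
    + exact: nobig.
    + by subst n; exact: (nobull5 (Fn := c5N) (F := cycle_rel 5) (fun _ _ => erefl) erefl).2.
have Hh := no_F eS eI (tf_small (Fn := houseN) (F := house) (fun _ _ => erefl) tf_house) Hel Hiso
  (nobull5 (Fn := houseN) (F := house) (fun _ _ => erefl) erefl).1
  (nobull5 (Fn := houseN) (F := house) (fun _ _ => erefl) erefl).2.
have Hg := no_F eS eI (tf_small (Fn := gemN) (F := gem) (fun _ _ => erefl) tf_gem) Hel Hiso
  (nobull5 (Fn := gemN) (F := gem) (fun _ _ => erefl) erefl).1
  (nobull5 (Fn := gemN) (F := gem) (fun _ _ => erefl) erefl).2.
have Hd := no_F eS eI (tf_small (Fn := dominoN) (F := domino) (fun _ _ => erefl) tf_domino) Hel Hiso
  (@nobig 6 domino bull erefl) (@nobig 6 domino (compl bull) erefl).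
split.
- split; first by move=> n Hn; case: (Hcyc n Hn).
  by split; [exact: Hh.1 | split; [exact: Hd.1 | exact: Hg.1]].
- split; first by move=> n Hn; case: (Hcyc n Hn).
  by split; [exact: Hh.2 | split; [exact: Hd.2 | exact: Hg.2]].
Qed.

Lemma small (e : rel T) (eI : irreflexive e) (S : {set T}) : #|S| <= 1 -> iso_induced_sub e S bull.
Proof.
move=> H; exists (fun _ => ord0); split.
  by move=> x y Hx Hy _; apply: (card_le1_eqP H).
by move=> x y Hx Hy; rewrite ((card_le1_eqP H) _ _ Hx Hy) eI.
Qed.

Lemma reduce (e : rel T) (eS : symmetric e) (eI : irreflexive e)
  (hN : forall (x0 : T) vs, uniq vs -> bad (matrix e vs) = false) :
  forall n (S : {set T}), #|S| <= n -> exists S', twin_elim e S S' /\ iso_induced_sub e S' bull.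
Proof.
elim=> [|n IH] S Hn.
  by exists S; split; [exact: twin_elim_refl | apply: small; move: Hn; case: #|S|].
case: (boolP [exists u, exists v, twins_in e S v u]) => [/existsP [u /existsP [v Htw]] | Hno].
  have HvS : v \in S by case/and4P: Htw.
  case: (IH (S :\ v)) => [|S' [H1 H2]].
    by move: Hn; rewrite (cardsD1 v S) HvS.
  by exists S'; split => //; exact: twin_elim_step Htw H1.
case: (leqP #|S| 1) => H1.
  by exists S; split; [exact: twin_elim_refl | exact: small].
exists S; split; first exact: twin_elim_refl.
apply: crux => // u v; apply/negP => H; move/negP: Hno; apply; apply/existsP; exists v.
by apply/existsP; exists u.
Qed.

End F.

Theorem mainTheorem7 (T : finType) (e : rel T) :
  symmetric e -> irreflexive e -> connected_graph e ->
  ((distance_hereditary e /\ distance_hereditary (compl e)) <->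
   exists S : {set T}, twin_elim e [set: T] S /\ iso_induced_sub e S bull).
Proof.
move=> eS eI _; split.
- move=> [D1 D2]; have hN := noBad D1 D2.
  case: (reduce eS eI hN (leqnn #|[set: T]|)) => S' [H1 H2].
  by exists S'.
- move=> [S' [H1 H2]]; exact: (@DH_of T e eS eI S' H1 H2).
Qed.
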